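(* Consider the problem $1|p\text{-}batch,v_i,incompatible|\sum w_iC_i$ defined as follows. Let $N=\{1,\ldots,n\}$ be a set of jobs partitioned into families $N_1,\ldots,N_m$ (pairwise disjoint, union $N$). Each job $i$ has a weight $w_i\ge 0$, a size $v_i$ with $0\le v_i\le V$, and processing time $p_i=q_j>0$ for all $i\in N_j$. A single machine of capacity $V$ processes batches: a batch is a set of jobs from a single family whose total size is at most $V$; a batch of family $j$ occupies the machine for $q_j$ time units without interruption, the machine processes at most one batch at a time, every job belongs to exactly one batch, and each job's completion time $C_i$ equals the completion time of its batch. The objective is to minimize $\sum_{i\in N} w_iC_i$. For each family $j$, order the jobs of $N_j$ in non-increasing order of size and load them greedily in that order until the remaining capacity is insufficient for the next job; let $N_j^b$ be the number of jobs so loaded, and let $B_j=\lceil |N_j|/N_j^b\rceil$. Then there exists an optimal solution in which, for every family $j$, the number of batches containing jobs of family $j$ is at most $B_j$.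
   Context: Any $N_j^b$ jobs of $N_j$ together have total size at most $V$ (since the $N_j^b$ largest jobs of $N_j$ fit). The weights $w_i$ are assumed nonnegative (in the paper they are drawn from positive integers). *)

(* Defs.v *)
From mathcomp Require Import all_boot all_order all_algebra.
Set Implicit Arguments. Unset Strict Implicit. Unset Printing Implicit Defensive.
Import Order.TTheory GRing.Theory Num.Theory.
Local Open Scope ring_scope.

(* Jobs are 'I_n, families are 'I_m, [fam i] is the family of job i
   (so N_j = [set i | fam i == j] partition the jobs).
   w : weights, v : sizes, V : capacity, q : processing time of each family. *)

Definition family_jobs (n m : nat) (fam : 'I_n -> 'I_m) (j : 'I_m) : {set 'I_n} :=
  [set i | fam i == j].

Fixpoint greedy_count (R : numDomainType) (cap : R) (s : seq R) : nat :=
  if s is x :: s' then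
    (if x <= cap then (greedy_count (cap - x) s').+1 else 0%N)
  else 0%N.

Definition sorted_sizes (R : numDomainType) (n m : nat) (fam : 'I_n -> 'I_m)
    (v : 'I_n -> R) (j : 'I_m) : seq R :=
  sort (fun x y : R => y <= x) [seq v i | i <- enum (family_jobs fam j)].

Definition Nb (R : numDomainType) (n m : nat) (fam : 'I_n -> 'I_m)
    (v : 'I_n -> R) (V : R) (j : 'I_m) : nat :=
  greedy_count V (sorted_sizes fam v j).

Definition ceil_div (a b : nat) : nat := ((a + b.-1) %/ b)%N.

Definition Bbound (R : numDomainType) (n m : nat) (fam : 'I_n -> 'I_m)
    (v : 'I_n -> R) (V : R) (j : 'I_m) : nat :=
  ceil_div #|family_jobs fam j| (Nb fam v V j).

(* A solution: since there are at most n nonempty batches, batches are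
   labelled by 'I_n.  [assign i] is the batch of job i, [start k] is the
   start time of batch k.  Only nonempty batches (those containing a job)
   matter; batch k is the set [set i | assign i == k]. *)
Definition feasible (R : numDomainType) (n m : nat) (fam : 'I_n -> 'I_m)
    (v : 'I_n -> R) (V : R) (q : 'I_m -> R)
    (assign : 'I_n -> 'I_n) (start : 'I_n -> R) : Prop :=
  (forall i i' : 'I_n, assign i = assign i' -> fam i = fam i')
  /\ (forall k : 'I_n, \sum_(i | assign i == k) v i <= V)
  /\ (forall i : 'I_n, 0 <= start (assign i))
  /\ (forall i i' : 'I_n, assign i != assign i' ->
        start (assign i) + q (fam i) <= start (assign i')
        \/ start (assign i') + q (fam i') <= start (assign i)).

Definition completion (R : numDomainType) (n m : nat) (fam : 'I_n -> 'I_m)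
    (q : 'I_m -> R) (assign : 'I_n -> 'I_n) (start : 'I_n -> R) (i : 'I_n) : R :=
  start (assign i) + q (fam i).

Definition cost (R : numDomainType) (n m : nat) (fam : 'I_n -> 'I_m)
    (w : 'I_n -> R) (q : 'I_m -> R) (assign : 'I_n -> 'I_n) (start : 'I_n -> R) : R :=
  \sum_(i < n) w i * completion fam q assign start i.

Definition num_batches (n m : nat) (fam : 'I_n -> 'I_m)
    (assign : 'I_n -> 'I_n) (j : 'I_m) : nat :=
  #|assign @: family_jobs fam j|.

(* Main.v *)
Require Import Defs.
From mathcomp Require Import all_boot all_order all_algebra.
From Stdlib Require Import Classical FunctionalExtensionality.
From mathcomp Require Import zify.
Import Order.TTheory GRing.Theory Num.Theory.
Set Implicit Arguments. Unset Strict Implicit. Unset Printing Implicit Defensive.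
Local Open Scope ring_scope.

Lemma exists_min (R : realFieldType) (T : finType) (P : T -> Prop) (F : T -> R) :
  (exists x, P x) -> exists x, P x /\ forall y, P y -> F x <= F y.
Proof.
move=> [x0 Px0].
suff H : forall l : seq T, (exists x, P x /\ x \in l) ->
  exists x, P x /\ forall y, P y -> y \in l -> F x <= F y.
  have [x [Px Hx]] := H (enum T) (ex_intro _ x0 (conj Px0 (mem_enum _ _))).
  by exists x; split => // y Py; apply: Hx => //; rewrite mem_enum.
elim=> [|a l IH] [x [Px xl]]; first by rewrite in_nil in xl.
have [[x' [Px' xl']]|Hn] := classic (exists x, P x /\ x \in l).
  have [z [Pz Hz]] := IH (ex_intro _ x' (conj Px' xl')).
  have [Pa|nPa] := classic (P a).
    have [le|lt] := leP (F a) (F z).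
      exists a; split => // y Py; rewrite in_cons => /orP [/eqP->//|yl].
      exact: le_trans le (Hz y Py yl).
    exists z; split => // y Py; rewrite in_cons => /orP [/eqP->|yl]; last exact: Hz.
    exact: ltW.
  exists z; split => // y Py; rewrite in_cons => /orP [/eqP ya|yl]; last exact: Hz.
  by subst y.
have Pa : P a.
  move: xl; rewrite in_cons => /orP [/eqP xa|xl]; first by subst x.
  by exfalso; apply: Hn; exists x.
exists a; split => // y Py; rewrite in_cons => /orP [/eqP->//|yl].
by exfalso; apply: Hn; exists y.
Qed.

Lemma sum_sub (R : realFieldType) (T : finType) (P Q : pred T) (F : T -> R) :
  (forall x, P x -> Q x) -> (forall x, Q x -> 0 <= F x) ->
  \sum_(x | P x) F x <= \sum_(x | Q x) F x.
Proof.
move=> PQ F0.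
rewrite [X in _ <= X](bigID P) /=.
have -> : \sum_(i | Q i && P i) F i = \sum_(i | P i) F i.
  by apply: eq_bigl => i; case Pi: (P i); rewrite ?andbT ?andbF ?PQ.
rewrite lerDl; apply: sumr_ge0 => i /andP [Qi _]; exact: F0.
Qed.

Lemma greedy_sum (R : realFieldType) (s : seq R) (cap : R) : 0 <= cap ->
  \sum_(x <- take (greedy_count cap s) s) x <= cap.
Proof.
elim: s cap => [|x s IH] cap c0 /=; first by rewrite big_nil.
case: ifP => xc /=; last by rewrite big_nil.
rewrite big_cons.
have := IH (cap - x); rewrite subr_ge0 => /(_ xc) H.
by rewrite -lerBrDl.
Qed.

Lemma take_step (R : realFieldType) (s : seq R) (x : R) k :
  (forall y, y \in s -> y <= x) -> 0 <= x ->
  \sum_(y <- take k.+1 s) y <= x + \sum_(y <- take k s) y.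
Proof.
elim: s k => [|y s IH] k Hy x0 /=; first by rewrite !big_nil addr0.
case: k => [|k] /=.
  by rewrite take0 !big_cons !big_nil !addr0; apply: Hy; rewrite mem_head.
rewrite !big_cons addrCA lerD2l; apply: IH => // z zs; apply: Hy.
by rewrite in_cons zs orbT.
Qed.

Lemma multiset_top (R : realFieldType) (s : seq R) k (t u : seq R) :
  sorted (fun x y : R => y <= x) s -> (forall y, y \in s -> 0 <= y) ->
  perm_eq s (t ++ u) -> (size t <= k)%N ->
  \sum_(x <- t) x <= \sum_(x <- take k s) x.
Proof.
elim: s k t u => [|x s IH] k t u Hs H0 Hp Hk.
  move: (perm_size Hp); rewrite size_cat /=; case: t Hp Hk => //= _ _ _.
case: k Hk => [|k] Hk.
  by case: t Hp Hk => // _ _; rewrite !big_nil.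
have Hs' : sorted (fun x y : R => y <= x) s := path_sorted Hs.
have H0' : forall y, y \in s -> 0 <= y by move=> y ys; apply: H0; rewrite in_cons ys orbT.
have Hall : forall y, y \in s -> y <= x.
  move=> y ys.
  have tr : transitive (fun x y : R => y <= x).
    by move=> b a c /= h1 h2; exact: le_trans h2 h1.
  by have := order_path_min tr Hs => /allP /(_ y ys).
have xin : x \in t ++ u by rewrite -(perm_mem Hp) mem_head.
rewrite /= big_cons.
rewrite mem_cat in xin; case xt: (x \in t).
  have Pt := perm_to_rem xt.
  rewrite (perm_big _ Pt) big_cons lerD2l.
  apply: (IH k (rem x t) u Hs' H0').
    rewrite -(perm_cons x); apply: (perm_trans Hp).
    by rewrite -cat_cons perm_cat2r.
  by move: Hk; rewrite (perm_size Pt).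
rewrite xt /= in xin.
have Pu := perm_to_rem xin.
apply: le_trans; last by apply: (take_step k Hall (H0 x (mem_head _ _))).
apply: (IH k.+1 t (rem x u) Hs' H0') => //.
rewrite -(perm_cons x); apply: (perm_trans Hp).
apply: (perm_trans (y := t ++ x :: rem x u)); first by rewrite perm_cat2l.
by rewrite -cat1s perm_catCA.
Qed.

Lemma cap_lemma (R : realFieldType) n m (fam : 'I_n -> 'I_m) (v : 'I_n -> R) V j
  (A : {set 'I_n}) :
  (forall i, 0 <= v i <= V) -> 0 <= V ->
  A \subset family_jobs fam j -> (#|A| <= Nb fam v V j)%N -> \sum_(i in A) v i <= V.
Proof.
move=> hv V0 AN Ak.
set l := enum (family_jobs fam j).
have Hp : perm_eq (sorted_sizes fam v j)
   (map v (filter (mem A) l) ++ map v (filter (predC (mem A)) l)).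
  rewrite /sorted_sizes -map_cat.
  apply: (perm_trans (y := map v l)); first by rewrite perm_sort.
  by apply: perm_map; rewrite perm_sym perm_filterC.
have -> : \sum_(i in A) v i = \sum_(x <- map v (filter (mem A) l)) x.
  rewrite big_map big_filter /l big_enum_cond; apply: eq_bigl => i.
  have -> : mem A i = (i \in A) by [].
  case iA: (i \in A); rewrite ?andbT ?andbF //.
  by rewrite (subsetP AN i iA).
apply: (le_trans (y := \sum_(x <- take (Nb fam v V j) (sorted_sizes fam v j)) x)); last exact: greedy_sum.
apply: (multiset_top (u := map v (filter (predC (mem A)) l))) => //.
- by apply: sort_sorted => x y; exact: le_total.
- by move=> y; rewrite mem_sort => /mapP [i _ ->]; have /andP[] := hv i.
- rewrite size_map; apply: leq_trans Ak; rewrite cardE.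
  apply: uniq_leq_size; first by rewrite filter_uniq // enum_uniq.
  move=> x; rewrite mem_filter => /andP [h _]; rewrite mem_enum; exact: h.
Qed.

Lemma Nb_pos (R : realFieldType) n m (fam : 'I_n -> 'I_m) (v : 'I_n -> R) V j :
  (forall i, 0 <= v i <= V) -> (0 < #|family_jobs fam j|)%N -> (0 < Nb fam v V j)%N.
Proof.
move=> hv Hc; rewrite /Nb.
case E: (sorted_sizes fam v j) => [|x s'].
  by move: (congr1 size E); rewrite /sorted_sizes size_sort size_map -cardE => h; rewrite h in Hc.
have : x \in sorted_sizes fam v j by rewrite E mem_head.
rewrite mem_sort => /mapP [i _ ->] /=.
by have /andP [_ ->] := hv i.
Qed.

Definition ne n (a : 'I_n -> 'I_n) (k : 'I_n) : bool := [exists x, a x == k].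
Definition Sb (R : realFieldType) n (a : 'I_n -> 'I_n) (s : 'I_n -> R) (k : 'I_n) : {set 'I_n} :=
  [set k' | ne a k' && (s k' < s k)].
Definition blen (R : realFieldType) n m (fam : 'I_n -> 'I_m) (q : 'I_m -> R)
  (a : 'I_n -> 'I_n) (k : 'I_n) : R :=
  if [pick x | a x == k] is Some x then q (fam x) else 0.
Definition sc (R : realFieldType) n m (fam : 'I_n -> 'I_m) (q : 'I_m -> R)
  (a : 'I_n -> 'I_n) (s : 'I_n -> R) (k : 'I_n) : R :=
  \sum_(k' in Sb a s k) blen fam q a k'.

Lemma blen_eq (R : realFieldType) n m (fam : 'I_n -> 'I_m) (q : 'I_m -> R) a x :
  (forall x y, a x = a y -> fam x = fam y) -> blen fam q a (a x) = q (fam x).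
Proof.
move=> Hf; rewrite /blen; case: pickP => [y /eqP ay|/(_ x)]; last by rewrite eqxx.
by rewrite (Hf _ _ ay).
Qed.

Lemma blen_ge0 (R : realFieldType) n m (fam : 'I_n -> 'I_m) (q : 'I_m -> R) a k :
  (forall j, 0 < q j) -> 0 <= blen fam q a k.
Proof. by move=> hq; rewrite /blen; case: pickP => // y _; exact: ltW. Qed.

Lemma feas_order (R : realFieldType) n m (fam : 'I_n -> 'I_m) v V q a (s : 'I_n -> R) x y :
  (forall j, 0 < q j) -> feasible fam v V q a s -> a x != a y -> s (a x) < s (a y) ->
  s (a x) + q (fam x) <= s (a y).
Proof.
move=> hq [_ [_ [_ F4]]] nxy lt; case: (F4 x y nxy) => // h.
have : s (a y) < s (a x) by apply: lt_le_trans h; rewrite ltrDl.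
by rewrite ltNge (ltW lt).
Qed.

Lemma feas_neq (R : realFieldType) n m (fam : 'I_n -> 'I_m) v V q a (s : 'I_n -> R) x y :
  (forall j, 0 < q j) -> feasible fam v V q a s -> a x != a y ->
  s (a x) < s (a y) \/ s (a y) < s (a x).
Proof.
move=> hq [_ [_ [_ F4]]] nxy; case: (F4 x y nxy) => h; [left|right];
  (apply: lt_le_trans h; rewrite ltrDl //).
Qed.

Lemma ne_wit n (a : 'I_n -> 'I_n) k : ne a k -> exists x, a x = k.
Proof. by move=> /existsP [x /eqP ax]; exists x. Qed.

Lemma key_L (R : realFieldType) n m (fam : 'I_n -> 'I_m) v V q a (s : 'I_n -> R) k :
  (forall j, 0 < q j) -> feasible fam v V q a s -> ne a k ->
  \sum_(k' in Sb a s k) blen fam q a k' <= s k.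
Proof.
move=> hq F.
have F' := F; case: F' => [F1 [_ [F3 _]]].
suff H : forall N k, (#|Sb a s k| <= N)%N -> ne a k ->
   \sum_(k' in Sb a s k) blen fam q a k' <= s k by apply: H.
elim=> [|N IH] {}k Hc nek.
  move: Hc; rewrite leqn0 cards_eq0 => /eqP ->; rewrite big_set0.
  by have [x <-] := ne_wit nek; apply: F3.
have [E|[k0 k0in]] := set_0Vmem (Sb a s k).
  by rewrite E big_set0; have [x <-] := ne_wit nek; apply: F3.
have [kmax [kin Hmax]] := exists_min (fun k' => - s k') (ex_intro (fun k' => k' \in Sb a s k) k0 k0in).
move: (kin); rewrite inE => /andP [nekm ltkm].
have [y ay] := ne_wit nekm.
have [x ax] := ne_wit nek.
have sub1 : Sb a s kmax \subset Sb a s k.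
  apply/subsetP => k'; rewrite !inE => /andP [-> lt] /=; exact: lt_trans lt ltkm.
have pr : Sb a s kmax \proper Sb a s k.
  apply/properP; split => //; exists kmax => //; by rewrite inE ltxx andbF.
have Hc' : (#|Sb a s kmax| <= N)%N.
  by rewrite -ltnS; apply: leq_trans (proper_card pr) Hc.
rewrite (bigD1 kmax) //=.
have -> : blen fam q a kmax = q (fam y) by rewrite -ay blen_eq.
apply: (le_trans (y := q (fam y) + s kmax)).
  rewrite lerD2l; apply: le_trans (IH kmax Hc' nekm).
  apply: sum_sub; last by move=> k' _; apply: blen_ge0.
  move=> k' /andP [k'in k'ne]; move: (k'in); rewrite !inE => /andP [nek' ltk'] /=.
  rewrite nek' /=.
  have le : s k' <= s kmax by rewrite -lerN2; apply: Hmax.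
  rewrite lt_neqAle le andbT.
  have [z az] := ne_wit nek'.
  rewrite -az -ay; have nz : a z != a y by rewrite az ay.
  by case: (feas_neq hq F nz) => h; [rewrite lt_eqF | rewrite gt_eqF].
rewrite addrC -ay -ax; apply: (feas_order (v:=v) (V:=V) hq F).
  by apply/eqP => e; move: ltkm; rewrite -ay -ax e ltxx.
by rewrite ay ax.
Qed.

Lemma sc_step (R : realFieldType) n m (fam : 'I_n -> 'I_m) v V q a (s : 'I_n -> R) x y :
  (forall j, 0 < q j) -> feasible fam v V q a s -> s (a x) < s (a y) ->
  sc fam q a s (a x) + q (fam x) <= sc fam q a s (a y).
Proof.
move=> hq F lt.
have F' := F; case: F' => [F1 _].
rewrite /sc [X in _ <= X](bigD1 (a x)) /=; last first.
  by rewrite inE lt andbT; apply/existsP; exists x.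
rewrite blen_eq // [X in _ <= X]addrC lerD2r.
apply: sum_sub; last by move=> k' _; apply: blen_ge0.
move=> k'; rewrite !inE => /andP [nek' ltk']; rewrite nek' /= (lt_trans ltk' lt) /=.
by apply/eqP => e; move: ltk'; rewrite e ltxx.
Qed.

Lemma canon (R : realFieldType) n m (fam : 'I_n -> 'I_m) v V q a (s : 'I_n -> R) w :
  (forall i, 0 <= w i) -> (forall j, 0 < q j) -> feasible fam v V q a s ->
  feasible fam v V q a (sc fam q a s) /\
  cost fam w q a (sc fam q a s) <= cost fam w q a s.
Proof.
move=> hw hq F.
have F' := F; case: F' => [F1 [F2 [F3 F4]]].
split.
  split => //; split => //; split.
    by move=> i; apply: sumr_ge0 => k' _; apply: blen_ge0.
  move=> x y nxy; case: (feas_neq hq F nxy) => lt; [left|right]; exact: sc_step.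
apply: ler_sum => x _; rewrite /completion; apply: ler_wpM2l => //.
rewrite lerD2r; apply: key_L => //; by apply/existsP; exists x.
Qed.

Definition batch n (a : 'I_n -> 'I_n) (k : 'I_n) : {set 'I_n} := [set x | a x == k].
Definition Phi (R : realFieldType) n (a : 'I_n -> 'I_n) (s : 'I_n -> R) : nat :=
  (\sum_(x < n) #|Sb a s (a x)|)%N.

Lemma famK n m (fam : 'I_n -> 'I_m) (a : 'I_n -> 'I_n) j k x :
  (forall x y, a x = a y -> fam x = fam y) ->
  k \in a @: family_jobs fam j -> a x = k -> fam x = j.
Proof.
move=> F1 /imsetP [z zin ->] axz; rewrite (F1 _ _ axz).
by move: zin; rewrite inE => /eqP.
Qed.

Lemma count_lemma (R : realFieldType) n m (fam : 'I_n -> 'I_m) v V q a (s : 'I_n -> R) j :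
  (forall i, 0 <= v i <= V) -> (forall j, 0 < q j) -> feasible fam v V q a s ->
  (forall k1 k2, k1 \in a @: family_jobs fam j -> k2 \in a @: family_jobs fam j ->
     s k1 < s k2 -> (Nb fam v V j <= #|batch a k1|)%N) ->
  (num_batches fam a j <= Bbound fam v V j)%N.
Proof.
move=> hv hq F H.
have F' := F; case: F' => [F1 _].
rewrite /num_batches /Bbound /ceil_div.
set K := a @: family_jobs fam j.
set N := family_jobs fam j.
have [E|[k0 k0in]] := set_0Vmem K; first by rewrite E cards0.
have [kmax [kin Hmax]] := exists_min (fun k' => - s k') (ex_intro (fun k' => k' \in K) k0 k0in).
have [z zin az] : exists2 z, z \in N & a z = kmax.
  by move: kin => /imsetP [z zin ->]; exists z.
have Nbp : (0 < Nb fam v V j)%N.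
  by apply: Nb_pos => //; apply/card_gt0P; exists z.
have cardN : #|N| = (\sum_(k in K) #|batch a k|)%N.
  rewrite -sum1_card (partition_big_imset a); apply: eq_bigr => k kK.
  rewrite -sum1_card; apply: eq_bigl => x; rewrite !inE.
  case e: (a x == k); rewrite ?andbT ?andbF //.
  by rewrite (famK F1 kK (eqP e)) eqxx.
have Hb : forall k, k \in K -> k != kmax -> (Nb fam v V j <= #|batch a k|)%N.
  move=> k kK nk; apply: (H k kmax kK kin).
  have le : s k <= s kmax by rewrite -lerN2; apply: Hmax.
  rewrite lt_neqAle le andbT.
  move: kK nk => /imsetP [x _ ->] nk.
  rewrite -az; have nz : a x != a z by rewrite az; exact: nk.
  by case: (feas_neq hq F nz) => h; [rewrite lt_eqF | rewrite gt_eqF].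
have b1 : (1 <= #|batch a kmax|)%N by apply/card_gt0P; exists z; rewrite inE az.
have : ((#|K|.-1) * Nb fam v V j + 1 <= #|N|)%N.
  rewrite cardN (bigD1 kmax) //= addnC leq_add //.
  have -> : (#|K|.-1 * Nb fam v V j = \sum_(i in K | i != kmax) Nb fam v V j)%N.
    rewrite (eq_bigl (mem [predD1 K & kmax])) ?sum_nat_const.
      by rewrite (cardD1 kmax K) kin.
    by move=> i; rewrite !inE andbC.
  by apply: leq_sum => k /andP [kK nk]; apply: Hb.
rewrite leq_divRL //.
have : (0 < #|K|)%N by apply/card_gt0P; exists kmax.
case: #|K| => // c _ /=; rewrite mulSn; lia.
Qed.

Lemma step (R : realFieldType) n m (fam : 'I_n -> 'I_m) v V q a (s : 'I_n -> R) w j :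
  (forall i, 0 <= w i) -> (forall i, 0 <= v i <= V) -> (forall j, 0 < q j) ->
  feasible fam v V q a s ->
  ~~ (num_batches fam a j <= Bbound fam v V j)%N ->
  exists a', [/\ feasible fam v V q a' s, cost fam w q a' s <= cost fam w q a s
    & (Phi a' s < Phi a s)%N].
Proof.
move=> hw hv hq F nb.
have F' := F; case: F' => [F1 [F2 [F3 F4]]].
set K := a @: family_jobs fam j.
have [k1 [k2 [k1K [k2K [lt12 cnt]]]]] : exists k1 k2, [/\ k1 \in K, k2 \in K,
    s k1 < s k2 & (#|batch a k1| < Nb fam v V j)%N].
  apply: NNPP => Hn; move/negP: nb; apply; apply: (count_lemma hv hq F).
  move=> k1 k2 k1K k2K lt; rewrite leqNgt; apply/negP => c.
  by apply: Hn; exists k1, k2.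
move: (k2K) => /imsetP [i iN ai].
move: (k1K) => /imsetP [z zN az].
have famz : fam z = j by move: zN; rewrite inE => /eqP.
have fami : fam i = j by move: iN; rewrite inE => /eqP.
set a' := fun x => if x == i then k1 else a x.
have rep : forall x, exists x', a x' = a' x /\ fam x' = fam x.
  move=> x; rewrite /a'; case: eqP => [->|_]; last by exists x.
  by exists z; rewrite -az famz fami.
have sub : forall k, Sb a' s k \subset Sb a s k.
  move=> k; apply/subsetP => k'; rewrite !inE => /andP [/existsP [x /eqP ax] ->].
  rewrite andbT; have [x' [e _]] := rep x; apply/existsP; exists x'; by rewrite e ax.
exists a'; split.
- split.
    move=> x y e; have [x' [ex fx]] := rep x; have [y' [ey fy]] := rep y.
    by rewrite -fx -fy; apply: F1; rewrite ex ey.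
  split.
    move=> k; case: (eqVneq k k1) => [->|nk].
      have V0 : 0 <= V by have /andP [h1 h2] := hv i; exact: le_trans h1 h2.
      have -> : \sum_(x | a' x == k1) v x = \sum_(x in [set x | a' x == k1]) v x.
        by apply: eq_bigl => x; rewrite inE.
      apply: (cap_lemma (fam := fam) (j := j)) => //.
        apply/subsetP => x; rewrite !inE /a'; case: (x =P i) => [->|_]; first by rewrite fami.
        by move/eqP => ax; rewrite (famK F1 k1K ax).
      apply: leq_trans cnt.
      apply: (leq_trans (n := #|i |: batch a k1|)).
        apply: subset_leq_card; apply/subsetP => x; rewrite !inE /a'.
        by case: (x =P i) => [->|_]; rewrite ?eqxx ?orbT.
      by rewrite cardsU1; case: (i \notin batch a k1).
    apply: le_trans (F2 k); apply: sum_sub; last by move=> x _; have /andP [] := hv x.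
    move=> x; rewrite /a'; case: (x =P i) => [_ e|//]; by move: e; rewrite eq_sym (negbTE nk).
  split.
    by move=> x; have [x' [e _]] := rep x; rewrite -e.
  move=> x y nxy; have [x' [ex fx]] := rep x; have [y' [ey fy]] := rep y.
  rewrite -ex -ey -fx -fy; apply: F4; by rewrite ex ey.
- apply: ler_sum => x _; rewrite /completion /a'; case: (x =P i) => [->|_] //.
  by apply: ler_wpM2l => //; rewrite -ai lerD2r ltW.
- rewrite /Phi (bigD1 i) //= [X in (_ < X)%N](bigD1 i) //=.
  have h1 : (\sum_(x < n | x != i) #|Sb a' s (a' x)| <= \sum_(x < n | x != i) #|Sb a s (a x)|)%N.
    apply: leq_sum => x nx; rewrite /a' (negbTE nx); exact: subset_leq_card.
  have h2 : (#|Sb a' s (a' i)| < #|Sb a s (a i)|)%N.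
    have -> : a' i = k1 by rewrite /a' eqxx.
    rewrite -ai; apply: (leq_ltn_trans (subset_leq_card (sub k1))).
    apply: proper_card; apply/properP; split.
      apply/subsetP => k'; rewrite !inE => /andP [-> lt] /=; exact: lt_trans lt lt12.
    exists k1; last by rewrite inE ltxx andbF.
    by rewrite inE lt12 andbT; apply/existsP; exists z; rewrite az.
  exact: (leq_add h2 h1).
Qed.

Lemma iterate (R : realFieldType) n m (fam : 'I_n -> 'I_m) v V q (s : 'I_n -> R) w :
  (forall i, 0 <= w i) -> (forall i, 0 <= v i <= V) -> (forall j, 0 < q j) ->
  forall N a, (Phi a s <= N)%N -> feasible fam v V q a s ->
  exists a'', [/\ feasible fam v V q a'' s, cost fam w q a'' s <= cost fam w q a s
    & forall j, (num_batches fam a'' j <= Bbound fam v V j)%N].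
Proof.
move=> hw hv hq; elim=> [|N IH] a HP F.
  have [Hb|Hn] := classic (forall j, (num_batches fam a j <= Bbound fam v V j)%N).
    by exists a; split.
  have [j nj] := not_all_ex_not _ _ Hn.
  have [a' [_ _ lt]] := step hw hv hq F (introN idP nj).
  by move: lt; rewrite ltnNge (leq_trans HP (leq0n _)).
have [Hb|Hn] := classic (forall j, (num_batches fam a j <= Bbound fam v V j)%N).
  by exists a; split.
have [j nj] := not_all_ex_not _ _ Hn.
have [a' [F' c' lt]] := step hw hv hq F (introN idP nj).
have [a'' [F'' c'' B'']] := IH a' (leq_trans lt HP) F'.
by exists a''; split => //; apply: le_trans c'' c'.
Qed.

Lemma trivial_feasible (R : realFieldType) n m (fam : 'I_n -> 'I_m) (v : 'I_n -> R) V q :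
  (forall i, 0 <= v i <= V) -> (forall j, 0 < q j) ->
  exists a s, feasible fam v V q a s.
Proof.
move=> hv hq.
pose s := fun k : 'I_n => \sum_(k' in [set k' : 'I_n | (k' < k)%N]) q (fam k').
exists id, s; split; first by move=> x y ->.
split.
  move=> k; rewrite (big_pred1 k) /=; first by have /andP [] := hv k.
  by move=> x; rewrite eq_sym.
split; first by move=> i; apply: sumr_ge0 => k _; exact: ltW.
have H : forall x y : 'I_n, (x < y)%N -> s x + q (fam x) <= s y.
  move=> x y lt; rewrite /s [X in _ <= X](bigD1 x) /=; last by rewrite inE.
  rewrite [X in _ <= X]addrC lerD2r; apply: sum_sub; last by move=> k _; exact: ltW.
  move=> k; rewrite !inE => lk; rewrite (ltn_trans lk lt) /=.
  by apply/eqP => e; move: lk; rewrite e ltnn.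
move=> x y /= nxy; case: (ltngtP x y) => [lt|lt|e]; [left|right|]; try exact: H.
by move: nxy; rewrite (val_inj e) eqxx.
Qed.

Definition startB (R : realFieldType) n m (fam : 'I_n -> 'I_m) (q : 'I_m -> R)
  (a : 'I_n -> 'I_n) (B : {ffun 'I_n -> {set 'I_n}}) (k : 'I_n) : R :=
  \sum_(k' in B k) blen fam q a k'.

Unset Implicit Arguments.
Set Strict Implicit.

Theorem mainTheorem1 (R : realFieldType) (n m : nat) (fam : 'I_n -> 'I_m)
    (w v : 'I_n -> R) (V : R) (q : 'I_m -> R) :
  (forall i, 0 <= w i) ->
  (forall i, 0 <= v i <= V) ->
  (forall j, 0 < q j) ->
  exists (assign : 'I_n -> 'I_n) (start : 'I_n -> R),
    [/\ feasible fam v V q assign start,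
        (forall (assign' : 'I_n -> 'I_n) (start' : 'I_n -> R),
            feasible fam v V q assign' start' ->
            cost fam w q assign start <= cost fam w q assign' start')
      & (forall j, (num_batches fam assign j <= Bbound fam v V j)%N)].
Proof.
move=> hw hv hq.
pose T := ({ffun 'I_n -> 'I_n} * {ffun 'I_n -> {set 'I_n}})%type.
pose P := fun t : T => feasible fam v V q t.1 (startB fam q t.1 t.2) /\
   forall j, (num_batches fam t.1 j <= Bbound fam v V j)%N.
pose Fc := fun t : T => cost fam w q t.1 (startB fam q t.1 t.2).
have pipe : forall a s, feasible fam v V q a s -> exists t, P t /\ Fc t <= cost fam w q a s.
  move=> a s F.
  have [a'' [F'' c'' B'']] := iterate hw hv hq (leqnn _) F.
  have [Fc' cc'] := canon hw hq F''.
  exists ([ffun x => a'' x], [ffun k => Sb a'' s k]).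
  have E1 : fun_of_fin [ffun x => a'' x] = a'' by apply: functional_extensionality => x; rewrite ffunE.
  have E2 : startB fam q a'' [ffun k => Sb a'' s k] = sc fam q a'' s.
    by apply: functional_extensionality => k; rewrite /startB ffunE.
  rewrite /P /Fc /= E1 E2; split; first by split.
  exact: le_trans cc' c''.
have [a0 [s0 F0]] := trivial_feasible fam hv hq.
have [t0 [Pt0 _]] := pipe a0 s0 F0.
have [t [[Ft Bt] Ht]] := exists_min Fc (ex_intro P t0 Pt0).
exists t.1, (startB fam q t.1 t.2); split => // a' s' F'.
have [t' [Pt' Ct']] := pipe a' s' F'.
exact: le_trans (Ht t' Pt') Ct'.
Qed.
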